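(* Let $X$ be an abelian metric group and let $f:X\to\mathbb{R}$ be a subadditive function which is locally bounded above at some point of $X$ (i.e. bounded above on some neighbourhood of that point). Then $f$ is locally bounded at every point of $X$.
   Context: An abelian metric group is an abelian topological group whose topology is given by an invariant metric. A function $f:X\to\mathbb{R}$ is subadditive if $f(x+y)\le f(x)+f(y)$ for all $x,y\in X$. Locally bounded at a point means $|f|$ is bounded on some neighbourhood of that point. *)

(* Defs.v *)
From HB Require Import structures.
From mathcomp Require Import all_boot all_order all_algebra.
From mathcomp Require Import reals.
Set Implicit Arguments. Unset Strict Implicit. Unset Printing Implicit Defensive.
Import Order.TTheory GRing.Theory Num.Theory.
Local Open Scope ring_scope.

Definition invariant_metric (R : realType) (X : zmodType) (d : X -> X -> R) : Prop :=
  [/\ forall x y, 0 <= d x y,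
      forall x y, d x y = 0 <-> x = y,
      forall x y, d x y = d y x,
      forall x y z, d x z <= d x y + d y z
    & forall x y z, d (x + z) (y + z) = d x y].

Definition mball (R : realType) (X : zmodType) (d : X -> X -> R) (x : X) (r : R) : X -> Prop :=
  fun y => d x y < r.

(* f is bounded above on some neighbourhood of x (in the metric topology,
   every neighbourhood contains an open ball of positive radius). *)
Definition locally_bounded_above_at (R : realType) (X : zmodType) (d : X -> X -> R)
    (f : X -> R) (x : X) : Prop :=
  exists r : R, 0 < r /\ exists M : R, forall y, mball d x r y -> f y <= M.

Definition locally_bounded_at (R : realType) (X : zmodType) (d : X -> X -> R)
    (f : X -> R) (x : X) : Prop :=
  exists r : R, 0 < r /\ exists M : R, forall y, mball d x r y -> `|f y| <= M.

Definition subadditive (R : realType) (X : zmodType) (f : X -> R) : Prop :=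
  forall x y, f (x + y) <= f x + f y.

(* Main.v *)
Require Import Defs.
From mathcomp Require Import all_boot all_order all_algebra.
From mathcomp Require Import reals.
From mathcomp Require Import lra.
Import Order.TTheory GRing.Theory Num.Theory.
Local Open Scope ring_scope.

Lemma shift_eq (R : realType) (X : zmodType) (d : X -> X -> R) (x0 x y : X) :
  invariant_metric d -> d x0 (x0 + (y - x)) = d x y.
Proof.
case=> _ _ _ _ inv.
have := inv 0 (y - x) x0; rewrite add0r [y - x + x0]addrC => ->.
by have := inv x y (- x); rewrite subrr => <-.
Qed.

Theorem corollary2p3 (R : realType) (X : zmodType) (d : X -> X -> R) (f : X -> R) :
  invariant_metric d ->
  subadditive f ->
  (exists x0 : X, locally_bounded_above_at d f x0) ->
  forall x : X, locally_bounded_at d f x.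
Proof.
move=> hd hs [x0 [r [r0 [M HM]]]] x.
exists r; split => //.
exists (Num.max (M + f (x - x0)) (M + f (- x) - f x0)) => y hy.
have hy' : d x0 (x0 + (y - x)) < r by rewrite (@shift_eq R X d x0 x y hd).
have hy'' : d x0 (x0 + (x - y)) < r.
  rewrite (@shift_eq R X d x0 y x hd); case: hd => _ _ sym _ _; by rewrite sym.
have up : f y <= M + f (x - x0).
  have := hs (x0 + (y - x)) (x - x0).
  have -> : x0 + (y - x) + (x - x0) = y.
    by rewrite addrC addrA subrK addrC subrK.
  move=> h; apply: le_trans h _; rewrite lerD2r; exact: HM.
have lo : f x0 - M - f (- x) <= f y.
  have h1 := hs y (x0 - y).
  have h2 := hs (x0 + (x - y)) (- x).
  have e1 : y + (x0 - y) = x0 by rewrite addrC subrK.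
  have e2 : x0 + (x - y) + - x = x0 - y.
    by rewrite -addrA [x - y]addrC -addrA subrr addr0.
  rewrite e1 in h1; rewrite e2 in h2.
  have h3 : f (x0 + (x - y)) <= M by exact: HM.
  lra.
rewrite ler_norml; apply/andP; split.
  apply: le_trans _ lo; rewrite lerNl.
  rewrite le_max; apply/orP; right; lra.
apply: le_trans up _; by rewrite le_max lexx.
Qed.
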